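(* Let $\Phi:\mathbb{R}^n\to(-\infty,\infty]$ be a proper lower semicontinuous convex function. Then there exists a lower semicontinuous convex function $\tilde\varphi:[0,\infty)\times\mathbb{R}^n\to(-\infty,\infty]$ such that $\tilde\varphi(0,y)=\Phi(y)$ for all $y\in\mathbb{R}^n$, $\tilde\varphi(x,y)\in\mathbb{R}$ for all $x>0$, $y\in\mathbb{R}^n$, for each $y$ the map $x\mapsto\tilde\varphi(x,y)$ is strictly decreasing on $(0,\infty)$, and $\lim_{x\to0+}\tilde\varphi(x,y)=\Phi(y)$ for each $y\in\mathbb{R}^n$.
   Context: A convex function $\Phi:\mathbb{R}^n\to(-\infty,\infty]$ is proper if it is not identically $+\infty$. *)

(* Defs.v *)
From HB Require Import structures.
From mathcomp Require Import all_boot all_order all_algebra.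
From mathcomp Require Import all_classical all_reals all_analysis.
Set Implicit Arguments. Unset Strict Implicit. Unset Printing Implicit Defensive.
Import Order.TTheory GRing.Theory Num.Theory.
Import numFieldNormedType.Exports.
Local Open Scope classical_set_scope.
Local Open Scope ring_scope.

(* Lower semicontinuity of an extended-real valued function relative to a
   set D (i.e. lower semicontinuity of the restriction f|_D for the subspace
   topology on D). *)
Definition lsc_within {X : topologicalType} {R : numFieldType}
  (D : set X) (f : X -> \bar R) :=
  forall x, D x -> forall a : R, (a%:E < f x)%E ->
    \forall z \near x, D z -> (a%:E < f z)%E.

Definition econvex_on {R : realType} {E : lmodType R}
  (D : set E) (f : E -> \bar R) :=
  forall x y (t : R), D x -> D y -> 0 < t -> t < 1 ->
    (f (t *: x + (1 - t) *: y)%R <= t%:E * f x + (1 - t)%:E * f y)%E.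

Definition eproper {T : Type} {R : numDomainType} (f : T -> \bar R) :=
  (forall x, f x != -oo%E) /\ exists x, f x != +oo%E.

(* Main.v *)
Require Import Defs.
From HB Require Import structures.
From mathcomp Require Import all_boot all_order all_algebra.
From mathcomp Require Import all_classical all_reals all_analysis.
From mathcomp Require Import ring lra.
Import Order.TTheory GRing.Theory Num.Theory.
Import numFieldNormedType.Exports.
Local Open Scope classical_set_scope.
Local Open Scope ring_scope.
Set Implicit Arguments. Unset Strict Implicit. Unset Printing Implicit Defensive.

Section S.
Variables (R : realType) (n : nat) (Phi : 'rV[R]_n -> \bar R).
Hypothesis Plsc : lower_semicontinuous Phi.
Hypothesis PnNy : forall x, Phi x != -oo%E.

Lemma ball_bounded_below (z0 : 'rV[R]_n) :
  exists m : R, forall z, `|z0 - z| <= 1 -> (m%:E < Phi z)%E.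
Proof.
pose A := [set z : 'rV[R]_n | `|z0 - z| <= 1].
have cA : compact A.
  apply: bounded_closed_compact.
    exists (`|z0| + 1); split; first by rewrite realE; apply/orP; left; rewrite addr_ge0.
    move=> M HM x Ax; apply: le_trans (ltW HM).
    have -> : x = z0 - (z0 - x) by rewrite opprB addrC subrK.
    by apply: le_trans (ler_normB _ _) _; rewrite lerD2l.
  have -> : A = closed_ball z0 1 by rewrite closed_ballE.
  exact: closed_ball_closed.
have : \forall M \near +oo%R, A `<=` (fun z => ((- M)%:E < Phi z)%E).
  apply: (proj1 (compact_near_coveringP A) cA). move=> x Ax.
  have [a ha] : exists a : R, (a%:E < Phi x)%E.
    move: (PnNy x); case: (Phi x) => [r _| _|//].
      by exists (r - 1); rewrite lte_fin ltrBlDr ltrDl.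
    by exists 0; rewrite ltey.
  have [V Vx HV] := Plsc ha.
  exists (V, [set M : R | - a < M]); first split => //=.
    by exists (- a); split; [exact: num_real | move=> M HM].
  case=> z M [/= Vz HM]; apply: le_lt_trans (HV _ Vz).
  by rewrite lee_fin lerNl ltW.
move=> [M0 [_ HM]]; exists (- (M0 + 1)) => z Az.
by apply: HM Az; rewrite ltrDl.
Qed.
Hypothesis Pcvx : econvex_on setT Phi.

Lemma linear_lb (z0 : 'rV[R]_n) (f0 : R) : Phi z0 = f0%:E ->
  exists m B : R, 0 <= B /\ forall z, ((m - B * `|z - z0|)%:E <= Phi z)%E.
Proof.
move=> Pz0; have [m Hm] := ball_bounded_below z0.
have mf0 : m < f0 by rewrite -lte_fin -Pz0; apply: Hm; rewrite subrr normr0.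
exists m, (f0 - m); split; first by rewrite subr_ge0 ltW.
move=> z; have [r1|r1] := leP `|z - z0| 1.
  have := Hm z; rewrite distrC => /(_ r1) H; apply: le_trans (ltW H).
  by rewrite lee_fin lerBlDr lerDl mulr_ge0 // subr_ge0 ltW.
set r := `|z - z0| in r1 *.
have r0 : 0 < r by apply: lt_trans r1.
pose t := r^-1.
have t0 : 0 < t by rewrite invr_gt0.
have t1 : t < 1 by rewrite invf_lt1.
have := Pcvx (x:=z) (y:=z0) I I t0 t1.
have -> : Phi (t *: z + (1 - t) *: z0) = Phi (t *: z + (1 - t) *: z0) by [].
have hw : `|z0 - (t *: z + (1 - t) *: z0)| <= 1.
  have -> : z0 - (t *: z + (1 - t) *: z0) = t *: (z0 - z).
    by rewrite scalerBl scale1r !scalerBr opprD opprB addrCA subrKC addrC.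
  by rewrite normrZ gtr0_norm // distrC mulVf ?gt_eqF.
have := Hm _ hw; move=> H1 H2; have H3 := lt_le_trans H1 H2.
move: H3; rewrite Pz0.
move: (PnNy z); case: (Phi z) => [p _| _ _|//]; last by rewrite leey.
rewrite -!EFinM -EFinD lte_fin lee_fin => h.
have e : t * p + (1 - t) * f0 = (p + (r - 1) * f0) / r.
  by rewrite /t; field; rewrite gt_eqF.
rewrite e ltr_pdivlMr // in h.
nra.
Qed.

End S.

Lemma gcont (R : realType) n (x c : R) (y z : 'rV[R]_n) : 0 < x ->
  (fun q : R * 'rV[R]_n => c + `|(2 *: y - z) - q.2| ^+ 2 / (2 * x - q.1) - (2 * x - q.1))
   @ (x, y) --> (c + `|y - z| ^+ 2 / x - x).
Proof.
move=> x0.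
have h1 : (fun q : R * 'rV[R]_n => 2 * x - q.1) @ (x, y) --> x.
  have e : 2 * x - x = x by ring.
  rewrite -[X in _ --> X]e.
  apply: cvgB; first exact: cvg_cst.
  exact: cvg_fst.
have h2 : (fun q : R * 'rV[R]_n => `|(2 *: y - z) - q.2|) @ (x, y) --> `|y - z|.
  have e : (2 *: y - z) - y = y - z.
    by rewrite scaler_nat mulr2n addrAC addrK.
  rewrite -e.
  apply: cvg_norm; apply: cvgB; first exact: cvg_cst.
  exact: cvg_snd.
apply: cvgB; last by [].
apply: cvgD; first exact: cvg_cst.
apply: cvgM; last first.
  apply: cvgV; first by rewrite gt_eqF.
  exact: h1.
rewrite expr2.
under eq_fun => q do rewrite expr2.
exact: (cvgM h2 h2).
Qed.

Section C.
Variables (R : realType) (n : nat) (Phi : 'rV[R]_n -> \bar R).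
Hypothesis Plsc : lower_semicontinuous Phi.
Hypothesis Pcvx : econvex_on setT Phi.
Variables (z0 : 'rV[R]_n) (f0 m B : R).
Hypothesis Pz0 : Phi z0 = f0%:E.
Hypothesis B0 : 0 <= B.
Hypothesis Hlb : forall z, ((m - B * `|z - z0|)%:E <= Phi z)%E.

Definition cost x (y z : 'rV[R]_n) := (Phi z + (`|y - z| ^+ 2 / x)%:E)%E.
Definition env x y := ereal_inf (range (cost x y)).
Definition envr x y := fine (env x y).
Definition phi (p : R * 'rV[R]_n) :=
  if p.1 <= 0 then Phi p.2 else (env p.1 p.2 - p.1%:E)%E.

Definition Lb x (y : 'rV[R]_n) := m - B * `|y - z0| - B ^+ 2 * x / 4.

Lemma sq_bound s x : 0 < x -> - (B ^+ 2 * x / 4) <= s ^+ 2 / x - B * s.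
Proof.
move=> x0.
have -> : s ^+ 2 / x - B * s = (s - B * x / 2) ^+ 2 / x - B ^+ 2 * x / 4.
  by field; rewrite gt_eqF.
by rewrite lerDr divr_ge0 ?sqr_ge0 ?ltW.
Qed.

Lemma cost_lb x y z : 0 < x -> ((Lb x y)%:E <= cost x y z)%E.
Proof.
move=> x0; rewrite /cost; move: (Hlb z); case: (Phi z) => [p| |] //.
rewrite -EFinD !lee_fin => hp.
have t : `|z - z0| <= `|y - z| + `|y - z0|.
  have -> : z - z0 = (y - z0) - (y - z).
    by rewrite (opprB y z) (addrC (y - z0)) addrA subrK.
  by apply: le_trans (ler_normB _ _) _; rewrite addrC.
have := sq_bound `|y - z| x0; rewrite /Lb.
have : B * `|z - z0| <= B * (`|y - z| + `|y - z0|) by rewrite ler_wpM2l.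
lra.
by move=> _; rewrite addye // leey.
Qed.

Lemma env_lb x y : 0 < x -> ((Lb x y)%:E <= env x y)%E.
Proof. by move=> x0; apply: le_ereal_inf_tmp => _ [z _ <-]; exact: cost_lb. Qed.

Lemma env_ub x y z : (env x y <= cost x y z)%E.
Proof. by apply: ereal_inf_lbound; exists z. Qed.

Lemma env_fin x y : 0 < x -> env x y \is a fin_num.
Proof.
move=> x0; rewrite fin_numElt; apply/andP; split.
  by apply: lt_le_trans (env_lb y x0); rewrite ltNyr.
by apply: le_lt_trans (env_ub x y z0) _; rewrite /cost Pz0 -EFinD ltry.
Qed.

Lemma envE x y : 0 < x -> env x y = (envr x y)%:E.
Proof. by move=> x0; rewrite /envr fineK // env_fin. Qed.

Lemma phi0 y : phi (0, y) = Phi y.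
Proof. by rewrite /phi /= lexx. Qed.

Lemma phiE x y : 0 < x -> phi (x, y) = (envr x y - x)%:E.
Proof. by move=> x0; rewrite /phi /= leNgt x0 /= envE. Qed.

Lemma envr_lb x y a : 0 < x -> (forall z, (a%:E <= cost x y z)%E) -> a <= envr x y.
Proof.
move=> x0 H; rewrite -lee_fin -envE //.
by apply: le_ereal_inf_tmp => _ [z _ <-]; exact: H.
Qed.

Lemma envr_ub x y z c : 0 < x -> Phi z = c%:E -> envr x y <= c + `|y - z| ^+ 2 / x.
Proof.
by move=> x0 Pz; rewrite -lee_fin -envE // EFinD -Pz; exact: env_ub.
Qed.

Lemma envr_approx x y e : 0 < x -> 0 < e -> exists z c, Phi z = c%:E /\
  c + `|y - z| ^+ 2 / x < envr x y + e.
Proof.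
move=> x0 e0; have [_ [z _ <-]] := lb_ereal_inf_adherent e0 (env_fin y x0).
rewrite /cost -/(env x y) envE //; move: (Hlb z); case E: (Phi z) => [c| |] //.
  by move=> _; rewrite -!EFinD lte_fin => h; exists z, c.
Qed.

Lemma envr_mono x1 x2 y : 0 < x1 -> x1 <= x2 -> envr x2 y <= envr x1 y.
Proof.
move=> x10 x12; have x20 := lt_le_trans x10 x12.
apply: envr_lb => // z; rewrite -envE //.
apply: le_trans (env_ub x2 y z) _.
rewrite /cost leeD // lee_fin ler_wpM2l ?sqr_ge0 // lef_pV2 ?posrE //.
Qed.
Lemma phi_fin x y : 0 < x -> phi (x, y) \is a fin_num.
Proof. by move=> x0; rewrite phiE. Qed.

Lemma phi_nNy p : 0 <= p.1 -> phi p != -oo%E.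
Proof.
case: p => x y /= x0; have [->|xp] := eqVneq x 0.
  rewrite phi0; apply/negP => /eqP E; have := Hlb y; rewrite E.
  by rewrite leeNy_eq.
by rewrite phiE // lt_neqAle eq_sym xp.
Qed.

Lemma phi_decr y x1 x2 : 0 < x1 -> x1 < x2 -> (phi (x2, y) < phi (x1, y))%E.
Proof.
move=> x10 x12; have x20 := lt_trans x10 x12.
rewrite !phiE // lte_fin.
have := envr_mono y x10 (ltW x12); lra.
Qed.

Definition q (x a : R) := if 0 < x then a ^+ 2 / x else 0.

Lemma quad t x1 x2 a b : 0 < t -> t < 1 -> 0 <= x1 -> 0 <= x2 ->
  (x1 = 0 -> a = 0) -> (x2 = 0 -> b = 0) -> 0 < t * x1 + (1 - t) * x2 ->
  (t * a + (1 - t) * b) ^+ 2 / (t * x1 + (1 - t) * x2)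
    <= t * q x1 a + (1 - t) * q x2 b.
Proof.
move=> t0 t1 x10 x20 ha hb X0; rewrite /q.
have t1' : 0 < 1 - t by rewrite subr_gt0.
have [x1p|x1n] := ltP 0 x1; have [x2p|x2n] := ltP 0 x2.
- pose u := a / x1; pose v := b / x2.
  have -> : a = u * x1 by rewrite /u divfK // gt_eqF.
  have -> : b = v * x2 by rewrite /v divfK // gt_eqF.
  have -> : (u * x1) ^+ 2 / x1 = u ^+ 2 * x1 by field; rewrite gt_eqF.
  have -> : (v * x2) ^+ 2 / x2 = v ^+ 2 * x2 by field; rewrite gt_eqF.
  rewrite ler_pdivrMr //.
  have h : 0 <= t * (1 - t) * x1 * x2 * (u - v) ^+ 2.
    apply: mulr_ge0 (sqr_ge0 _); apply: mulr_ge0 (ltW x2p); apply: mulr_ge0 (ltW x1p); exact: mulr_ge0 (ltW t0) (ltW t1').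
  suff -> : (t * (u ^+ 2 * x1) + (1 - t) * (v ^+ 2 * x2)) * (t * x1 + (1 - t) * x2)
     = (t * (u * x1) + (1 - t) * (v * x2)) ^+ 2 + t * (1 - t) * x1 * x2 * (u - v) ^+ 2.
    by rewrite lerDl.
  by ring.
- have x2z : x2 = 0 by apply/le_anti; rewrite x2n.
  rewrite (hb x2z) x2z !mulr0 !addr0 in X0 *.
  have -> : (t * a) ^+ 2 / (t * x1) = t * (a ^+ 2 / x1) by field; rewrite ?gt_eqF.
  by [].
- have x1z : x1 = 0 by apply/le_anti; rewrite x1n.
  rewrite (ha x1z) x1z !mulr0 !add0r in X0 *.
  have -> : ((1 - t) * b) ^+ 2 / ((1 - t) * x2) = (1 - t) * (b ^+ 2 / x2) by field; rewrite ?gt_eqF.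
  by [].
- have x1z : x1 = 0 by apply/le_anti; rewrite x1n.
  have x2z : x2 = 0 by apply/le_anti; rewrite x2n.
  by rewrite x1z x2z !mulr0 addr0 ltxx in X0.
Qed.

Lemma pick x y c e : 0 <= x -> phi (x, y) = c%:E -> 0 < e ->
  exists z d, [/\ Phi z = d%:E, (x = 0 -> z = y) & d + q x `|y - z| <= c + x + e].
Proof.
move=> x0 Ec e0; have [xz|xp] := eqVneq x 0.
  move: Ec; rewrite xz phi0 => Ec; exists y, c; split => //.
  by rewrite /q ltxx !addr0 lerDl ltW.
have xp' : 0 < x by rewrite lt_neqAle eq_sym xp.
move: Ec; rewrite phiE // => -[<-].
have [z [d [Pz h]]] := envr_approx y xp' e0.
exists z, d; split => //; first by move=> x00; rewrite x00 eqxx in xp.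
by rewrite /q xp' subrK ltW.
Qed.

Lemma norm_mix t (y1 y2 z1 z2 : 'rV[R]_n) : 0 <= t -> t <= 1 ->
  `|(t *: y1 + (1 - t) *: y2) - (t *: z1 + (1 - t) *: z2)|
    <= t * `|y1 - z1| + (1 - t) * `|y2 - z2|.
Proof.
move=> t0 t1.
have -> : (t *: y1 + (1 - t) *: y2) - (t *: z1 + (1 - t) *: z2)
   = t *: (y1 - z1) + (1 - t) *: (y2 - z2).
  by rewrite !scalerBr opprD addrACA.
apply: le_trans (ler_normD _ _) _.
by rewrite !normrZ !ger0_norm // subr_ge0.
Qed.

Lemma phi_convex : econvex_on [set p : R * 'rV[R]_n | 0 <= p.1] phi.
Proof.
move=> [x1 y1] [x2 y2] t /= x10 x20 t0 t1.
have -> : t *: (x1, y1) + (1 - t) *: (x2, y2) =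
  (t * x1 + (1 - t) * x2, t *: y1 + (1 - t) *: y2) by [].
have t1' : 0 < 1 - t by rewrite subr_gt0.
have [[x1z x2z]|Xp] : (x1 = 0 /\ x2 = 0) \/ 0 < t * x1 + (1 - t) * x2.
  have [x1z|x1p] := eqVneq x1 0; have [x2z|x2p] := eqVneq x2 0.
  - by left.
  - right; rewrite x1z mulr0 add0r mulr_gt0 // lt_neqAle eq_sym x2p //.
  - right; rewrite x2z mulr0 addr0 mulr_gt0 // lt_neqAle eq_sym x1p //.
  - right; apply: ltr_wpDr; first by rewrite mulr_ge0 // ltW.
    by rewrite mulr_gt0 // lt_neqAle eq_sym x1p.
  rewrite x1z x2z !mulr0 addr0 !phi0; exact: Pcvx.
rewrite phiE //.
have hN1 := @phi_nNy (x1, y1) x10; have hN2 := @phi_nNy (x2, y2) x20.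
move: hN1 hN2 (@pick x1 y1) (@pick x2 y2).
case: (phi (x1, y1)) => [c1| |] // _; case: (phi (x2, y2)) => [c2| |] // _.
- move=> P1 P2; rewrite -!EFinM -EFinD lee_fin.
  apply/ler_addgt0Pr => e e0.
  have [z1 [d1 [Pz1 z1y h1]]] := P1 c1 e x10 erefl e0.
  have [z2 [d2 [Pz2 z2y h2]]] := P2 c2 e x20 erefl e0.
  set z := t *: z1 + (1 - t) *: z2.
  have Hz := Pcvx (x:=z1) (y:=z2) I I t0 t1.
  rewrite Pz1 Pz2 -!EFinM -EFinD in Hz.
  move: (Hlb z) Hz; rewrite -/z; case E: (Phi z) => [dz| |] //.
  rewrite lee_fin => _ hz.
  have hu := envr_ub (t *: y1 + (1 - t) *: y2) Xp E.
  have hn := norm_mix y1 y2 z1 z2 (ltW t0) (ltW t1).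
  have ha1 : x1 = 0 -> `|y1 - z1| = 0 by move=> h; rewrite z1y // subrr normr0.
  have ha2 : x2 = 0 -> `|y2 - z2| = 0 by move=> h; rewrite z2y // subrr normr0.
  have hq := quad t0 t1 x10 x20 ha1 ha2 Xp.
  have hsq : `|t *: y1 + (1 - t) *: y2 - z| ^+ 2 / (t * x1 + (1 - t) * x2)
      <= (t * `|y1 - z1| + (1 - t) * `|y2 - z2|) ^+ 2 / (t * x1 + (1 - t) * x2).
    apply: ler_wpM2r; first by rewrite invr_ge0 ltW.
    rewrite ler_sqr ?nnegrE // ?addr_ge0 ?mulr_ge0 // ?ltW //.
  have h1' := ler_wpM2l (ltW t0) h1.
  have h2' := ler_wpM2l (ltW t1') h2.
  rewrite !mulrDr in h1' h2'.
  rewrite lee_fin in hz; lra.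
- by move=> _ _; rewrite gt0_muley ?lte_fin // -EFinM addey // leey.
- by move=> _ _; rewrite gt0_muley ?lte_fin // -EFinM addye // leey.
- by move=> _ _; rewrite !gt0_muley ?lte_fin // addye // leey.
Qed.

Lemma between a (u : \bar R) : (a%:E < u)%E -> exists2 a', a < a' & (a'%:E < u)%E.
Proof.
case: u => [c| |] // h.
  rewrite lte_fin in h; exists ((a + c) / 2); rewrite ?lte_fin; lra.
by exists (a + 1); rewrite ?ltey // ltrDl.
Qed.

Lemma near0 y a : (a%:E < Phi y)%E -> exists2 d, 0 < d &
  forall x' y', 0 < x' -> x' < d -> `|y - y'| < d -> (a%:E < phi (x', y'))%E.
Proof.
move=> /between [a' aa' a'P].
have [V Vy HV] := Plsc a'P.
move: Vy => /nbhs_ballP [del del0 hball].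
have Hdel : forall z, `|y - z| < del -> (a'%:E < Phi z)%E.
  by move=> z hz; apply: HV; apply: hball; rewrite -ball_normE.
pose C := m - B * (del / 2 + `|y - z0|).
pose K := 2 * `|a' - C| / del.
have K0 : 0 <= K by rewrite /K divr_ge0 ?mulr_ge0 // ltW.
pose d1 := del / (2 * (B + K + 1)).
have BK0 : 0 < B + K + 1 by rewrite ltr_pwDr // addr_ge0.
have d10 : 0 < d1 by rewrite /d1 divr_gt0 // mulr_gt0.
exists (Num.min (del / 2) (Num.min d1 (a' - a))).
  by rewrite !lt_min d10 subr_gt0 aa' divr_gt0.
move=> x' y' x0 xd yd; move: xd yd; rewrite !lt_min => /and3P[xd1 xd2 xd3] /and3P[yd1 _ _].
rewrite phiE // lte_fin.
suff : a' <= envr x' y' by lra.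
apply: envr_lb => // z.
have [zy|zy] := ltP `|y - z| del.
  have := Hdel z zy; rewrite /cost; case: (Phi z) => [p| |] //.
    rewrite !lte_fin -EFinD lee_fin => h.
    by apply: le_trans (ltW h) _; rewrite lerDl divr_ge0 ?sqr_ge0 // ltW.
rewrite /cost; move: (Hlb z); case: (Phi z) => [p| |] //.
rewrite -EFinD !lee_fin => hp.
set r := `|y' - z|.
have hr1 : del / 2 <= r.
  have : `|y - z| <= `|y - y'| + r.
    have -> : y - z = (y - y') + (y' - z) by rewrite addrA subrK.
    exact: ler_normD.
  lra.
have hr2 : `|z - z0| <= r + del / 2 + `|y - z0|.
  have -> : z - z0 = - (y' - z) - (y - y') + (y - z0).
    by rewrite (opprB y' z) (opprB y y') !subrKA.
  apply: le_trans (ler_normD _ _) _; rewrite lerD2r.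
  apply: le_trans (ler_normB _ _) _; rewrite normrN; rewrite -/r; lra.
have r0 : 0 < r by apply: lt_le_trans hr1; rewrite divr_gt0.
pose w := r / x'.
have hw : B + K + 1 < w.
  have -> : B + K + 1 = (del / 2) / d1 by rewrite /d1; field; rewrite ?gt_eqF.
  apply: (@lt_le_trans _ _ ((del / 2) / x')).
    by rewrite ltr_pM2l ?divr_gt0 // ltf_pV2.
  by rewrite ler_wpM2r // invr_ge0 ltW.
have hrw : r ^+ 2 / x' = r * w by rewrite /w mulrA expr2.
have hK : del / 2 * K = `|a' - C| by rewrite /K; field; rewrite gt_eqF.
have hC : a' - C <= `|a' - C| := ler_norm _.
have hBr : B * `|z - z0| <= B * (r + del / 2 + `|y - z0|) by rewrite ler_wpM2l.
have hprod : del / 2 * (K + 1) <= r * (w - B).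
  apply: ler_pM; rewrite ?divr_ge0 ?addr_ge0 //; [exact: ltW|lra].
rewrite /C in hC; nra.
by move=> _; rewrite addye // leey.
Qed.

Lemma lsc_pos (x : R) (y : 'rV[R]_n) (a : R) : 0 < x -> (a%:E < phi (x, y))%E ->
  \forall q \near (x, y), 0 <= q.1 -> (a%:E < phi q)%E.
Proof.
move=> x0; rewrite phiE // lte_fin => ha.
set f := envr x y - x in ha.
pose eps := f - a.
have e0 : 0 < eps by rewrite subr_gt0.
have e2 : 0 < eps / 2 by rewrite divr_gt0.
have [z [c [Pz hz]]] := envr_approx y x0 e2.
have hg := @gcont R n x c y z x0.
move/cvgrPdist_lt: hg => /(_ (eps / 2) e2) hg.
have hf : (fun q : R * 'rV[R]_n => q.1) @ (x, y) --> x by apply: cvg_fst.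
move/cvgrPdist_lt : hf => /(_ x x0) hf.
apply: filterS2 hf hg; case=> q1 q2 /= hq1 hq2 _.
move: hq1; rewrite ltr_norml => /andP[hq1 hq1'].
have q1p : 0 < q1 by lra.
have Xp : 0 < 2 * x - q1 by lra.
have hc := @phi_convex (q1, q2) (2 * x - q1, 2 *: y - q2) (2^-1) (ltW q1p) (ltW Xp).
have := hc (ltac:(by rewrite invr_gt0)) (ltac:(by rewrite invf_lt1 // ltr1n)) => {}hc.
have Emix : 2^-1 *: (q1, q2) + (1 - 2^-1) *: (2 * x - q1, 2 *: y - q2) = (x, y).
  have h12 : 1 - 2^-1 = 2^-1 :> R by field.
  have -> : 2^-1 *: (q1, q2) + (1 - 2^-1) *: (2 * x - q1, 2 *: y - q2) =
     (2^-1 * q1 + (1 - 2^-1) * (2 * x - q1), 2^-1 *: q2 + (1 - 2^-1) *: (2 *: y - q2)) by [].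
  congr pair; first by field.
  by rewrite h12 -scalerDr addrC subrK scalerA mulVf ?scale1r.
rewrite Emix !phiE // -!EFinM -EFinD lee_fin in hc.
have hu := envr_ub (2 *: y - q2) Xp Pz.
have eY : 2 *: y - z - q2 = 2 *: y - q2 - z by rewrite addrAC.
rewrite eY in hq2.
rewrite phiE // lte_fin.
move: hq2; rewrite ltr_norml => /andP[hq2 _].
rewrite /f in ha hz; rewrite /eps /f in hq2 hz.
lra.
Qed.

Lemma phi_lsc : lsc_within [set p : R * 'rV[R]_n | 0 <= p.1] phi.
Proof.
case=> x y /= x0 a ha.
have [xz|xp] := eqVneq x 0; last first.
  by apply: lsc_pos => //; rewrite lt_neqAle eq_sym xp.
move: ha; rewrite xz phi0 => ha.
have [d d0 Hd] := near0 ha.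
have [V Vy HV] := Plsc ha.
have hf : (fun q : R * 'rV[R]_n => q.1) @ ((0:R), y) --> (0:R) by apply: cvg_fst.
move/cvgrPdist_lt : hf => /(_ d d0) hf.
have hs : (fun q : R * 'rV[R]_n => q.2) @ ((0:R), y) --> y by apply: cvg_snd.
have hV : \forall q \near ((0:R), y), V q.2 by apply: hs.
move/cvgrPdist_lt : hs => /(_ d d0) hs.
apply: filterS2 hV (filterI hf hs).
case=> q1 q2 /= Vq [h1 h2] q10.
have [q1n|q1p] := leP q1 0.
  by rewrite /phi /= q1n; apply: HV.
apply: Hd => //; move: h1; rewrite sub0r normrN gtr0_norm //.
Qed.

Lemma phi_lim y : (fun x => phi (x, y)) @ (0:R)^'+ --> Phi y.
Proof.
move: (Hlb y); case E: (Phi y) => [r| |] // _.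
- apply/fine_cvgP; split.
    by near=> x; apply: phi_fin; near: x; exact: nbhs_right_gt.
  apply/cvgrPdist_lt => e e0.
  have [d d0 Hd] := @near0 y (r - e) (ltac:(by rewrite E lte_fin ltrBlDr ltrDl)).
  near=> x.
  have x0 : 0 < x by near: x; exact: nbhs_right_gt.
  have xd : x < d by near: x; exact: nbhs_right_lt.
  have := Hd x y x0 xd; rewrite subrr normr0 => /(_ d0).
  rewrite /= phiE // lte_fin /= => h.
  have hu := envr_ub y x0 E; rewrite subrr normr0 expr0n /= mul0r addr0 in hu.
  rewrite ltr_norml; apply/andP; split; lra.
- apply/cvgeyPgt => A.
  have [d d0 Hd] := @near0 y A (ltac:(by rewrite E ltey)).
  near=> x.
  have x0 : 0 < x by near: x; exact: nbhs_right_gt.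
  have xd : x < d by near: x; exact: nbhs_right_lt.
  by have := Hd x y x0 xd; rewrite subrr normr0 => /(_ d0).
Unshelve. all: end_near.
Qed.

End C.


Unset Implicit Arguments.

Theorem proposition1 (R : realType) (n : nat) (Phi : 'rV[R]_n -> \bar R) :
  eproper Phi -> lower_semicontinuous Phi -> econvex_on setT Phi ->
  exists phi : R * 'rV[R]_n -> \bar R,
    [/\ (forall p, 0 <= p.1 -> phi p != -oo%E),
        lsc_within [set p : R * 'rV[R]_n | 0 <= p.1] phi &
        econvex_on [set p : R * 'rV[R]_n | 0 <= p.1] phi] /\
    [/\ (forall y, phi (0, y) = Phi y),
        (forall x y, 0 < x -> phi (x, y) \is a fin_num),
        (forall y x1 x2, 0 < x1 -> x1 < x2 -> (phi (x2, y) < phi (x1, y))%E) &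
        (forall y, (fun x => phi (x, y)) @ (0:R)^'+ --> Phi y)].
Proof.
move=> [PnNy [z0 Pz0]] Plsc Pcvx.
have [f0 Ef0] : exists f0, Phi z0 = f0%:E.
  by move: (PnNy z0) Pz0; case: (Phi z0) => [r| |] // _ _; exists r.
have [m [B [B0 Hlb]]] := linear_lb Plsc PnNy Pcvx Ef0.
exists (phi Phi); split; split.
- by move=> p; exact: (phi_nNy Ef0 B0 Hlb).
- exact: (phi_lsc Plsc Pcvx Ef0 B0 Hlb).
- exact: (phi_convex Pcvx Ef0 B0 Hlb).
- exact: phi0.
- by move=> x y; exact: (phi_fin Ef0 B0 Hlb).
- by move=> y x1 x2; exact: (phi_decr Ef0 B0 Hlb).
- by move=> y; exact: (phi_lim Plsc Ef0 B0 Hlb).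
Qed.
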